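(* Let $K$ be a minimal complete valuation field and let $R$ and $S$ be unital $K$-Banach algebras. Then the canonical map $R\hat\otimes_{\mathbb Z}S\to R\hat\otimes_K S$ (identity on simple tensors) is an isometric isomorphism of Banach rings, and likewise the canonical map $R\hat\otimes^{\mathrm{um}}_{\mathbb Z}S\to R\hat\otimes^{\mathrm{um}}_K S$ is an isometric isomorphism.
   Context: A Banach ring is a ring complete w.r.t. a submultiplicative norm; unital means $\|1\|=1$. A complete valuation field $K$ is minimal if it has no proper closed subfield; up to isometric isomorphism these are $\mathbb Q$ and $\mathbb F_p$ with the trivial absolute value, $\mathbb R$ with $|\cdot|^\upsilon$ ($0<\upsilon\le 1$, $|\cdot|$ Euclidean), and $\mathbb Q_p$ with $|\cdot|_p^\omega$ ($\omega>0$). A unital $K$-Banach algebra is a unital Banach ring $A$ together with a contractive unital ring homomorphism from $K$ into the center of $A$. Projective tensor products: for a commutative unital Banach ring $T$ and Banach $T$-modules $X,Y$, on the algebraic tensor product $X\otimes_T Y$ put $\|z\|_\wedge=\inf\{\sum_k\|a_k\|\|b_k\|\}$ and $\|z\|^{\mathrm{um}}_\wedge=\inf\{\max_k\|a_k\|\|b_k\|\}$, the infima over all representations $z=\sum_{k=1}^n a_k\otimes b_k$; $X\hat\otimes_T Y$ (resp. $X\hat\otimes^{\mathrm{um}}_T Y$) is the completion of $X\otimes_T Y$ modulo the kernel of $\|\cdot\|_\wedge$ (resp. $\|\cdot\|^{\mathrm{um}}_\wedge$). Every unital Banach ring is regarded as a $\mathbb Z$-algebra, $\mathbb Z$ carrying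 the Euclidean absolute value; for unital Banach $T$-algebras these tensor products are Banach rings with $(a\otimes b)(c\otimes d)=ac\otimes bd$. *)

(* Defs.v *)
From Stdlib Require Import Reals ClassicalEpsilon.
From HB Require Import structures.
From mathcomp Require Import all_boot all_order all_algebra.
Set Implicit Arguments. Unset Strict Implicit. Unset Printing Implicit Defensive.
Import GRing.Theory.
Local Open Scope ring_scope.

Definition Rzero : R := IZR 0.
Definition Rone : R := IZR 1.

Definition cauchy_seq (A : zmodType) (nA : A -> R) (u : nat -> A) : Prop :=
  forall eps : R, Rlt Rzero eps ->
    exists N : nat, forall m n : nat, (N <= m)%N -> (N <= n)%N ->
      Rlt (nA (u m - u n)) eps.

Definition converges_to (A : zmodType) (nA : A -> R) (u : nat -> A) (l : A) : Prop :=
  Un_cv (fun n => nA (u n - l)) Rzero.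

Record BanachRing (A : nzRingType) (nA : A -> R) : Prop := {
  br_norm0 : nA 0 = Rzero;
  br_nonneg : forall x, Rle Rzero (nA x);
  br_definite : forall x, nA x = Rzero -> x = 0;
  br_opp : forall x, nA (- x) = nA x;
  br_triangle : forall x y, Rle (nA (x + y)) (Rplus (nA x) (nA y));
  br_submult : forall x y, Rle (nA (x * y)) (Rmult (nA x) (nA y));
  br_complete : forall u : nat -> A, cauchy_seq nA u ->
      exists l, converges_to nA u l }.

Definition UnitalBanachRing (A : nzRingType) (nA : A -> R) : Prop :=
  BanachRing nA /\ nA 1 = Rone.

Record CompleteValuationField (K : fieldType) (nK : K -> R) : Prop := {
  vf_nonneg : forall x, Rle Rzero (nK x);
  vf_definite : forall x, nK x = Rzero <-> x = 0;
  vf_mult : forall x y, nK (x * y) = Rmult (nK x) (nK y);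
  vf_triangle : forall x y, Rle (nK (x + y)) (Rplus (nK x) (nK y));
  vf_complete : forall u : nat -> K, cauchy_seq nK u ->
      exists l, converges_to nK u l }.

Definition closed_subfield (K : fieldType) (nK : K -> R) (P : K -> Prop) : Prop :=
  [/\ P 0, P 1,
      (forall x y, P x -> P y -> P (x - y)),
      (forall x y, P x -> P y -> P (x * y)) &
      (forall x, P x -> x != 0 -> P (x^-1))] /\
      (forall (u : nat -> K) l, (forall n, P (u n)) -> converges_to nK u l -> P l).

Definition minimal_cvf (K : fieldType) (nK : K -> R) : Prop :=
  CompleteValuationField nK /\
  forall P : K -> Prop, closed_subfield nK P -> forall x, P x.

Definition unital_K_Banach_algebra (K : fieldType) (nK : K -> R)
    (A : nzRingType) (nA : A -> R) (f : {rmorphism K -> A}) : Prop :=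
  [/\ UnitalBanachRing nA,
      (forall k a, f k * a = a * f k) &
      (forall k, Rle (nA (f k)) (nK k))].

(* A formal sum  sum_k a_k (x) b_k  is a list of pairs. *)
Definition ftens (A B : Type) := seq (A * B).

(* Two formal sums represent the same element of A (x)_Z B iff every
   biadditive map into an abelian group takes the same value on them
   (universal property of the tensor product over Z). *)
Definition biadditive (A B : zmodType) (M : zmodType) (beta : A -> B -> M) : Prop :=
  (forall a a' b, beta (a + a') b = beta a b + beta a' b) /\
  (forall a b b', beta a (b + b') = beta a b + beta a b').

Definition tens_eq_Z (A B : zmodType) (z w : ftens A B) : Prop :=
  forall (M : zmodType) (beta : A -> B -> M), biadditive beta ->
    \sum_(p <- z) beta p.1 p.2 = \sum_(p <- w) beta p.1 p.2.

(* Same over K, where A and B are K-modules via fA, fB (k.a := fA k * a):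
   the test maps are moreover K-balanced. *)
Definition tens_eq_K (K : fieldType) (A B : nzRingType)
    (fA : K -> A) (fB : K -> B) (z w : ftens A B) : Prop :=
  forall (M : zmodType) (beta : A -> B -> M), biadditive beta ->
    (forall k a b, beta (fA k * a) b = beta a (fB k * b)) ->
    \sum_(p <- z) beta p.1 p.2 = \sum_(p <- w) beta p.1 p.2.

Definition cost_sum (A B : Type) (nA : A -> R) (nB : B -> R) (z : ftens A B) : R :=
  foldr (fun p r => Rplus (Rmult (nA p.1) (nB p.2)) r) Rzero z.
Definition cost_max (A B : Type) (nA : A -> R) (nB : B -> R) (z : ftens A B) : R :=
  foldr (fun p r => Rmax (Rmult (nA p.1) (nB p.2)) r) Rzero z.

Definition Rinf (E : R -> Prop) : R :=
  epsilon (inhabits Rzero)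
    (fun m => (forall x, E x -> Rle m x) /\
              (forall m', (forall x, E x -> Rle m' x) -> Rle m' m)).

Definition proj_norm (A B : Type) (teq : ftens A B -> ftens A B -> Prop)
    (cost : ftens A B -> R) (z : ftens A B) : R :=
  Rinf (fun r => exists w, teq w z /\ r = cost w).

Definition fsub (A B : zmodType) (z w : ftens A B) : ftens A B :=
  z ++ [seq (- p.1, p.2) | p <- w].
Definition fmul (A B : nzRingType) (z w : ftens A B) : ftens A B :=
  [seq (p.1 * q.1, p.2 * q.2) | p <- z, q <- w].

(* ---------- completion of (A (x)_T B, pn) ----------
   Elements: Cauchy sequences of formal sums; two are identified when
   pn (x_n - y_n) -> 0; the norm of x is lim pn (x_n). *)
Section Completion.
Variables (A B : zmodType) (pn : ftens A B -> R).
Definition ccauchy (x : nat -> ftens A B) : Prop :=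
  forall eps : R, Rlt Rzero eps ->
    exists N : nat, forall m n : nat, (N <= m)%N -> (N <= n)%N ->
      Rlt (pn (fsub (x m) (x n))) eps.
Definition ceq (x y : nat -> ftens A B) : Prop :=
  Un_cv (fun n => pn (fsub (x n) (y n))) Rzero.
Definition cnorm (x : nat -> ftens A B) (r : R) : Prop :=
  Un_cv (fun n => pn (x n)) r.
End Completion.

(* The canonical map between the completions of (A (x) B, pn1) and
   (A (x) B, pn2) induced by the identity on simple tensors (i.e. the identity
   on formal sums) is well defined and is an isometric isomorphism (it is
   automatically a ring homomorphism, since the product is computed
   representative-wise by fmul in both completions). *)
Definition canonical_isometric_iso (A B : nzRingType) (pn1 pn2 : ftens A B -> R) : Prop :=
  [/\
      (forall x, ccauchy pn1 x -> ccauchy pn2 x),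
      (* well defined and injective *)
      (forall x y, ccauchy pn1 x -> ccauchy pn1 y -> (ceq pn1 x y <-> ceq pn2 x y)),
      (forall y, ccauchy pn2 y -> exists x, ccauchy pn1 x /\ ceq pn2 x y),
      (forall x, ccauchy pn1 x -> forall r, cnorm pn1 x r <-> cnorm pn2 x r) &
      (forall x y : nat -> ftens A B, ccauchy pn1 x -> ccauchy pn1 y ->
         ceq pn2 (fun n => fmul (x n) (y n)) (fun n => fmul (x n) (y n)))].

(* Main.v *)
Require Import Defs.
From Stdlib Require Import Reals Lra ClassicalEpsilon FunctionalExtensionality.
From HB Require Import structures.
From mathcomp Require Import all_boot all_order all_algebra.
From mathcomp Require Import generic_quotient.
Set Implicit Arguments. Unset Strict Implicit. Unset Printing Implicit Defensive.
Import GRing.Theory.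
Local Open Scope ring_scope.
Local Open Scope quotient_scope.

Lemma Rinf_spec (E : R -> Prop) : (exists x, E x) -> (forall x, E x -> Rle Rzero x) ->
  (forall x, E x -> Rle (Rinf E) x) /\
  (forall m', (forall x, E x -> Rle m' x) -> Rle m' (Rinf E)).
Proof.
move=> [x0 Ex0] Hlb; rewrite /Rinf; apply epsilon_spec.
pose F := fun y => E (Ropp y).
have [m [Hub Hlub]] : {m | is_lub F m}.
  apply: completeness.
  - exists Rzero => y Fy; have := Hlb _ Fy; rewrite /Rzero; lra.
  - exists (Ropp x0); rewrite /F Ropp_involutive //.
exists (Ropp m); split.
- move=> x Ex; have : F (Ropp x) by rewrite /F Ropp_involutive.
  move/Hub; lra.
- move=> m' Hm'; suff : Rle m (Ropp m') by lra.
  apply: Hlub => y Fy; have := Hm' _ Fy; lra.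
Qed.

Definition asb (P : Prop) : bool := if excluded_middle_informative P then true else false.
Lemma asbP (P : Prop) : reflect P (asb P).
Proof. by rewrite /asb; case: excluded_middle_informative => h; constructor. Qed.

Section TZ.
Variables (A B : zmodType).
Implicit Types u v w : ftens A B.
Definition negf (u : ftens A B) : ftens A B := [seq (- p.1, p.2) | p <- u].
Definition S (M : zmodType) (beta : A -> B -> M) (u : ftens A B) :=
  \sum_(p <- u) beta p.1 p.2.

Lemma S_cat (M : zmodType) (beta : A -> B -> M) u v : @S M beta (u ++ v) = S beta u + S beta v.
Proof. by rewrite /S big_cat. Qed.

Lemma bi0l (M : zmodType) (beta : A -> B -> M) : biadditive beta -> forall b, beta 0 b = 0.
Proof. move=> [Hl _] b; have h := Hl 0 0 b; rewrite addr0 in h. by apply: (addrI (beta 0 b)); rewrite addr0 -h. Qed.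
Lemma bi0r (M : zmodType) (beta : A -> B -> M) : biadditive beta -> forall a, beta a 0 = 0.
Proof. move=> [_ Hr] a; have h := Hr a 0 0; rewrite addr0 in h. by apply: (addrI (beta a 0)); rewrite addr0 -h. Qed.
Lemma biNl (M : zmodType) (beta : A -> B -> M) : biadditive beta -> forall a b, beta (- a) b = - beta a b.
Proof.
move=> Hb a b; apply: (addrI (beta a b)); by rewrite -Hb.1 !subrr bi0l.
Qed.
Lemma biNr (M : zmodType) (beta : A -> B -> M) : biadditive beta -> forall a b, beta a (- b) = - beta a b.
Proof.
move=> Hb a b; apply: (addrI (beta a b)); by rewrite -Hb.2 !subrr bi0r.
Qed.

Lemma S_neg (M : zmodType) (beta : A -> B -> M) u : biadditive beta -> @S M beta (negf u) = - S beta u.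
Proof.
move=> Hb; rewrite /S /negf big_map; elim: u => [|p u IH]; first by rewrite !big_nil oppr0.
by rewrite !big_cons IH /= biNl // opprD.
Qed.

Lemma S_fsub (M : zmodType) (beta : A -> B -> M) u v : biadditive beta -> @S M beta (fsub u v) = S beta u - S beta v.
Proof. by move=> Hb; rewrite /fsub S_cat -/(negf v) S_neg. Qed.

Lemma teqE u v : tens_eq_Z u v <-> forall M beta, biadditive beta -> @S M beta u = S beta v.
Proof. by []. Qed.

Lemma teq_refl u : tens_eq_Z u u. Proof. by []. Qed.
Lemma teq_sym u v : tens_eq_Z u v -> tens_eq_Z v u.
Proof. by move=> h M b hb; rewrite (h M b hb). Qed.
Lemma teq_trans u v w : tens_eq_Z u v -> tens_eq_Z v w -> tens_eq_Z u w.
Proof. by move=> h1 h2 M b hb; rewrite (h1 M b hb) (h2 M b hb). Qed.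
Lemma teq_cat u u' v v' : tens_eq_Z u u' -> tens_eq_Z v v' -> tens_eq_Z (u ++ v) (u' ++ v').
Proof. by move=> h1 h2 M b hb; rewrite -!/(S _ _) !S_cat; congr (_ + _); [apply: h1|apply: h2]. Qed.
Lemma teq_neg u u' : tens_eq_Z u u' -> tens_eq_Z (negf u) (negf u').
Proof. by move=> h M b hb; rewrite -!/(S _ _) !S_neg //; congr (- _); apply: h. Qed.
Lemma teq_fsub0 u v : tens_eq_Z u v -> tens_eq_Z (fsub u v) [::].
Proof. move=> h M b hb; rewrite -!/(S _ _) S_fsub //; have := h M b hb; rewrite -!/(S _ _) => ->. by rewrite subrr /S big_nil. Qed.

End TZ.

Record gpn (A B : zmodType) := GPN {
  gf :> ftens A B -> R;
  gf_resp : forall u v, tens_eq_Z u v -> gf u = gf v;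
  gf_nn : forall u, Rle Rzero (gf u);
  gf_nil : gf [::] = Rzero;
  gf_tri : forall u v, Rle (gf (u ++ v)) (Rplus (gf u) (gf v));
  gf_neg : forall u, gf (negf u) = gf u }.

Section Quot.
Variables (A B : zmodType) (g : gpn A B).
Implicit Types u v w x y z : ftens A B.

Definition Erel : rel (ftens A B) := fun x y => asb (g (fsub x y) = Rzero).

Lemma ErelP x y : reflect (g (fsub x y) = Rzero) (Erel x y).
Proof. exact: asbP. Qed.

Lemma teq_E u v : tens_eq_Z u v -> Erel u v.
Proof. by move=> h; apply/ErelP; rewrite (gf_resp g (teq_fsub0 h)) gf_nil. Qed.

Lemma g0_cat u v w : g u = Rzero -> g v = Rzero -> tens_eq_Z w (u ++ v) -> g w = Rzero.
Proof.
move=> hu hv hw; rewrite (gf_resp g hw); apply: Rle_antisym; last exact: gf_nn.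
have := gf_tri g u v; rewrite hu hv /Rzero; lra.
Qed.

Lemma Erel_refl : reflexive Erel.
Proof. by move=> x; apply: teq_E. Qed.
Lemma Erel_sym : symmetric Erel.
Proof.
have h : forall x y, Erel x y -> Erel y x.
  move=> x y /ErelP h; apply/ErelP; rewrite -h -(gf_neg g (fsub x y)).
  apply: gf_resp => M b hb; rewrite -!/(S _ _) S_neg // !S_fsub //.
  by rewrite opprB.
by move=> x y; apply/idP/idP; apply: h.
Qed.
Lemma Erel_trans : transitive Erel.
Proof.
move=> y x z /ErelP h1 /ErelP h2; apply/ErelP; apply: g0_cat h1 h2 _.
by by move=> M b hb; rewrite -!/(S _ _) S_cat !S_fsub // addrA subrK.
Qed.

Definition Erel_equiv := EquivRel Erel Erel_refl Erel_sym Erel_trans.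

Definition Q := {eq_quot Erel_equiv}%qT.

Definition pq u : Q := \pi_Q u.
Definition qzero : Q := pq [::].
Definition qopp (x : Q) : Q := pq (negf (repr x)).
Definition qadd (x y : Q) : Q := pq (repr x ++ repr y).

Lemma piE u v : (pq u = pq v) <-> Erel u v.
Proof.
have h := @eqquotE _ _ Q u v.
have -> : Erel u v = (u == v %[mod Q]) by rewrite h.
 by split => [E|E]; [apply/eqP; exact: E | exact/eqP].
Qed.

Lemma reprE u : Erel (repr (pq u)) u.
Proof. by apply/piE; rewrite /pq reprK. Qed.

Lemma Erel_cat x x' y y' : Erel x x' -> Erel y y' -> Erel (x ++ y) (x' ++ y').
Proof.
move=> /ErelP h1 /ErelP h2; apply/ErelP; apply: g0_cat h1 h2 _.
by move=> M b hb; rewrite -!/(S _ _) S_cat !S_fsub // !S_cat opprD addrACA.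
Qed.
Lemma Erel_neg x x' : Erel x x' -> Erel (negf x) (negf x').
Proof.
move=> /ErelP h; apply/ErelP; rewrite -h -(gf_neg g (fsub x x')).
apply: gf_resp => M b hb; rewrite -!/(S _ _) !S_neg // !S_fsub // !S_neg //.
by rewrite opprB opprK addrC.
Qed.

Lemma piD u v : qadd (pq u) (pq v) = pq (u ++ v).
Proof. by apply/piE; apply: Erel_cat; apply: reprE. Qed.
Lemma piN u : qopp (pq u) = pq (negf u).
Proof. by apply/piE; apply: Erel_neg; apply: reprE. Qed.

Lemma qaddA : associative qadd.
Proof.
move=> x y z; elim/quotW: x => x; elim/quotW: y => y; elim/quotW: z => z; rewrite -!/(pq _).
by rewrite !piD catA.
Qed.
Lemma qaddC : commutative qadd.
Proof.
move=> x y; elim/quotW: x => x; elim/quotW: y => y; rewrite -!/(pq _) !piD.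
by apply/piE; apply: teq_E => M b hb; rewrite -!/(S _ _) !S_cat addrC.
Qed.
Lemma qadd0 : left_id qzero qadd.
Proof. by move=> x; elim/quotW: x => x; rewrite -!/(pq _) /qzero piD. Qed.
Lemma qaddN : left_inverse qzero qopp qadd.
Proof.
move=> x; elim/quotW: x => x; rewrite -!/(pq _) /qzero piN piD.
by apply/piE; apply: teq_E => M b hb; rewrite -!/(S _ _) !S_cat S_neg // addNr /S big_nil.
Qed.

End Quot.

HB.instance Definition _ (A B : zmodType) (g : gpn A B) := Choice.on (Q g).
HB.instance Definition _ (A B : zmodType) (g : gpn A B) :=
  GRing.isZmodule.Build (Q g) (@qaddA A B g) (@qaddC A B g) (@qadd0 A B g) (@qaddN A B g).

Lemma negfK (A B : zmodType) (u : ftens A B) : negf (negf u) = u.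
Proof. by rewrite /negf -map_comp; elim: u => //= -[a b] u ->; rewrite opprK. Qed.

Lemma Rle_eps (x y : R) : (forall eps, Rlt Rzero eps -> Rle x (Rplus y eps)) -> Rle x y.
Proof.
move=> h; apply: Rnot_lt_le => hlt.
have := h (Rdiv (Rminus x y) (IZR 2)); rewrite /Rzero => h'. have : Rle x (Rplus y (Rdiv (Rminus x y) (IZR 2))).
  by apply: h'; lra.
lra.
Qed.

Section PN.
Variables (A B : zmodType) (cost : ftens A B -> R).
Implicit Types u v w z : ftens A B.
Hypothesis Cnn : forall w, Rle Rzero (cost w).
Hypothesis Cnil : cost [::] = Rzero.
Hypothesis Capp : forall u v, Rle (cost (u ++ v)) (Rplus (cost u) (cost v)).
Hypothesis Cneg : forall u, cost (negf u) = cost u.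

Definition pnZ := proj_norm (@tens_eq_Z A B) cost.

Lemma pn_spec z :
  (forall w, tens_eq_Z w z -> Rle (pnZ z) (cost w)) /\
  (forall c, (forall w, tens_eq_Z w z -> Rle c (cost w)) -> Rle c (pnZ z)).
Proof.
have [h1 h2] : _ /\ _ := @Rinf_spec (fun r => exists w, tens_eq_Z w z /\ r = cost w)
  (ex_intro _ (cost z) (ex_intro _ z (conj (teq_refl z) erefl)))
  (fun x '(ex_intro w (conj _ e)) => eq_ind_r _ (Cnn w) e).
split.
- by move=> w hw; apply: h1; exists w.
- by move=> c hc; apply: h2 => x [w [hw ->]]; apply: hc.
Qed.

Lemma pn_le w z : tens_eq_Z w z -> Rle (pnZ z) (cost w).
Proof. by move=> h; apply: (pn_spec z).1. Qed.
Lemma pn_glb c z : (forall w, tens_eq_Z w z -> Rle c (cost w)) -> Rle c (pnZ z).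
Proof. by move=> h; apply: (pn_spec z).2. Qed.
Lemma pn_nn z : Rle Rzero (pnZ z).
Proof. by apply: pn_glb. Qed.
Lemma pn_resp u v : tens_eq_Z u v -> pnZ u = pnZ v.
Proof.
move=> h; apply: Rle_antisym; apply: pn_glb => w hw; apply: pn_le.
- by apply: teq_trans hw (teq_sym h).
- by apply: teq_trans hw h.
Qed.
Lemma pn_nil : pnZ [::] = Rzero.
Proof. by apply: Rle_antisym; [rewrite -Cnil; apply: pn_le|apply: pn_nn]. Qed.

Lemma pn_approx u eps : Rlt Rzero eps ->
  exists u', tens_eq_Z u' u /\ Rlt (cost u') (Rplus (pnZ u) eps).
Proof.
move=> he; apply: NNPP => hn.
have : Rle (Rplus (pnZ u) eps) (pnZ u).
  apply: pn_glb => w hw; apply: Rnot_lt_le => hlt; apply: hn; by exists w.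
rewrite /Rzero in he; lra.
Qed.

Lemma pn_tri u v : Rle (pnZ (u ++ v)) (Rplus (pnZ u) (pnZ v)).
Proof.
apply: Rle_eps => eps he.
have he2 : Rlt Rzero (Rdiv eps (IZR 2)) by rewrite /Rzero in he *; lra.
have [u' [hu hu']] := pn_approx u he2.
have [v' [hv hv']] := pn_approx v he2.
have := pn_le (teq_cat hu hv); have := Capp u' v'; lra.
Qed.

Lemma pn_neg u : pnZ (negf u) = pnZ u.
Proof.
have h : forall u, Rle (pnZ (negf u)) (pnZ u).
  move=> x; apply: pn_glb => w hw; rewrite -Cneg; apply: pn_le; exact: teq_neg.
by apply: Rle_antisym => //; have := h (negf u); rewrite negfK.
Qed.

End PN.

Lemma biBl (A B M : zmodType) (beta : A -> B -> M) : biadditive beta ->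
  forall a a' b, beta (a - a') b = beta a b - beta a' b.
Proof. by move=> hb a a' b; rewrite hb.1 biNl. Qed.
Lemma biBr (A B M : zmodType) (beta : A -> B -> M) : biadditive beta ->
  forall a b b', beta a (b - b') = beta a b - beta a b'.
Proof. by move=> hb a b b'; rewrite hb.2 biNr. Qed.

Section GK.
Variables (K : fieldType) (A B : nzRingType) (fA : K -> A) (fB : K -> B) (g : gpn A B).

Lemma gK : (forall k a b, g (fsub [:: (fA k * a, b)] [:: (a, fB k * b)]) = Rzero) ->
  forall w z, tens_eq_K fA fB w z -> g (fsub w z) = Rzero.
Proof.
move=> Hk w z h.
pose beta := fun a b => pq g [:: (a, b)].
have Sq : forall u, \sum_(p <- u) beta p.1 p.2 = pq g u.
  elim=> [|[a b] u IH]; first by rewrite big_nil.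
  by rewrite big_cons IH; exact: (piD g [:: (a, b)] u).
have hb : biadditive beta.
  split=> a a' b; rewrite /beta;
    (apply: etrans _ (esym (piD g _ _)); apply/piE; apply: teq_E => M be hbe;
     rewrite !big_cons !big_nil /= !addr0).
  - exact: hbe.1.
  - exact: hbe.2.
have hbal : forall k a b, beta (fA k * a) b = beta a (fB k * b).
  by move=> k a b; apply/piE; apply/ErelP; exact: Hk.
have := h (Q g) beta hb hbal; rewrite !Sq => /piE /ErelP //.
Qed.
End GK.

Section KPart.
Variables (K : fieldType) (nK : K -> R) (A B : nzRingType) (nA : A -> R) (nB : B -> R).
Variables (fA : {rmorphism K -> A}) (fB : {rmorphism K -> B}).
Variable cost : ftens A B -> R.
Hypothesis Cnn : forall w, Rle Rzero (cost w).
Hypothesis Cnil : cost [::] = Rzero.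
Hypothesis Capp : forall u v, Rle (cost (u ++ v)) (Rplus (cost u) (cost v)).
Hypothesis Cneg : forall u, cost (negf u) = cost u.
Hypothesis Cpair : forall p q : A * B, Rle (cost [:: p; q])
   (Rplus (Rmult (nA p.1) (nB p.2)) (Rmult (nA q.1) (nB q.2))).
Hypothesis nAnn : forall a, Rle Rzero (nA a).
Hypothesis nBnn : forall b, Rle Rzero (nB b).
Hypothesis nAopp : forall a, nA (- a) = nA a.
Hypothesis nAmul : forall a a', Rle (nA (a * a')) (Rmult (nA a) (nA a')).
Hypothesis nBmul : forall b b', Rle (nB (b * b')) (Rmult (nB b) (nB b')).
Hypothesis fAc : forall k, Rle (nA (fA k)) (nK k).
Hypothesis fBc : forall k, Rle (nB (fB k)) (nK k).

Definition G : gpn A B := GPN (pn_resp Cnn) (pn_nn Cnn) (pn_nil Cnn Cnil)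
  (pn_tri Cnn Capp) (pn_neg Cnn Cneg).

Definition rel k a b : ftens A B := fsub [:: (fA k * a, b)] [:: (a, fB k * b)].

Lemma S_rel (M : zmodType) (be : A -> B -> M) k a b : biadditive be ->
  S be (rel k a b) = be (fA k * a) b - be a (fB k * b).
Proof. by move=> hb; rewrite /rel S_fsub // /S !big_cons !big_nil /= !addr0. Qed.

Definition P k := forall a b, G (rel k a b) = Rzero.

Lemma G0 u : tens_eq_Z u [::] -> G u = Rzero.
Proof. by move=> h; rewrite (gf_resp G h) gf_nil. Qed.

Lemma rel_sub x y a b : tens_eq_Z (rel (x - y) a b) (rel x a b ++ negf (rel y a b)).
Proof.
move=> M be hb; rewrite -!/(S _ _) S_rel // (S_cat _ (rel x a b)) S_neg // !S_rel // !rmorphB /=.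
rewrite !mulrBl biBl // biBr // opprB addrACA.
by rewrite [in RHS]opprB [in RHS]addrACA; congr (_ + _); rewrite addrC.
Qed.

Lemma P0 : P 0.
Proof.
move=> a b; apply: G0 => M be hb; rewrite -!/(S _ _) S_rel // rmorph0 !mul0r.
by rewrite rmorph0 mul0r bi0l // bi0r // subrr /S big_nil.
Qed.

Lemma P1 : P 1.
Proof.
move=> a b; apply: G0 => M be hb; rewrite -!/(S _ _) S_rel // (rmorph1 fA) (rmorph1 fB) !mul1r.
by rewrite subrr /S big_nil.
Qed.

Lemma Psub x y : P x -> P y -> P (x - y).
Proof.
move=> hx hy a b; apply: (@g0_cat _ _ G _ _ _ (hx a b) _ (rel_sub x y a b)).
by rewrite gf_neg hy.
Qed.

Lemma Pmul x y : P x -> P y -> P (x * y).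
Proof.
move=> hx hy a b; apply: (@g0_cat _ _ G _ _ _ (hx (fA y * a) b) (hy a (fB x * b))).
move=> M be hb; rewrite -!/(S _ _) S_rel // (S_cat _ (rel x _ _)) !S_rel //.
rewrite !rmorphM /= !mulrA -[fB y * fB x]rmorphM mulrC rmorphM /=.
by rewrite addrA subrK.
Qed.

Lemma Pinv x : P x -> x != 0 -> P (x^-1).
Proof.
move=> hx nx a b; rewrite -(hx (fA x^-1 * a) (fB x^-1 * b)) -gf_neg.
apply: gf_resp => M be hb; rewrite -!/(S _ _) S_neg // !S_rel //.
by rewrite !mulrA -!rmorphM /= mulfV // !rmorph1 !mul1r opprB.
Qed.

Hypothesis nKnn : forall k, Rle Rzero (nK k).

Lemma Plim (u : nat -> K) l : (forall n, P (u n)) -> converges_to nK u l -> P l.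
Proof.
move=> hu hc a b.
apply: Rle_antisym; last exact: gf_nn.
apply: Rle_eps => eps he.
have hC : Rle Rzero (Rmult (nA a) (nB b)) by apply: Rmult_le_pos.
set C := Rmult (nA a) (nB b) in hC.
have hD : Rlt Rzero (Rplus (Rmult (IZR 2) C) (IZR 1)) by rewrite /Rzero in hC *; lra.
have he' : Rgt (Rdiv eps (Rplus (Rmult (IZR 2) C) (IZR 1))) Rzero.
  by apply: Rdiv_lt_0_compat.
have [N hN] := hc _ he'.
have hN' := hN N (le_n N); rewrite /R_dist in hN'.
set d := u N - l in hN'.
have hab := Rle_abs (Rminus (nK d) Rzero).
have ht : Rlt (Rmult (nK d) (Rplus (Rmult (IZR 2) C) (IZR 1))) eps.
  have ht0 : Rlt (nK d) (Rdiv eps (Rplus (Rmult (IZR 2) C) (IZR 1))).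
    rewrite /Rzero in hab hN'; lra.
  have := Rmult_lt_compat_r _ _ _ hD ht0.
  rewrite /Rdiv Rmult_assoc Rinv_l ?Rmult_1_r //; rewrite /Rzero in hD; lra.
have hl : l = u N - d by rewrite /d subKr.
have h1 := @gf_tri _ _ G (rel (u N) a b) (negf (rel d a b)).
rewrite -(gf_resp G (rel_sub (u N) d a b)) -hl gf_neg (hu N a b) in h1.
have h2 : Rle (G (rel d a b)) (cost (rel d a b)) by apply: (pn_le Cnn).
have h3 := Cpair (fA d * a, b) (- a, fB d * b).
change (Rle (cost (rel d a b)) (Rplus (Rmult (nA (fA d * a)) (nB b)) (Rmult (nA (- a)) (nB (fB d * b))))) in h3.
rewrite nAopp in h3.
have h4 : Rle (nA (fA d * a)) (Rmult (nK d) (nA a)).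
  apply: Rle_trans (nAmul _ _) _; apply: Rmult_le_compat_r => //.
have h5 : Rle (nB (fB d * b)) (Rmult (nK d) (nB b)).
  apply: Rle_trans (nBmul _ _) _; apply: Rmult_le_compat_r => //.
have h6 := Rmult_le_compat_r _ _ _ (nBnn b) h4.
have h7 := Rmult_le_compat_l _ _ _ (nAnn a) h5.
have hk := nKnn d.
rewrite /C /Rzero in hC ht h1 hk *.
nra.
Qed.

Lemma P_closed : closed_subfield nK P.
Proof.
split; first split.
- exact: P0.
- exact: P1.
- exact: Psub.
- exact: Pmul.
- by move=> x hx nx; apply: Pinv.
- by move=> u l hu hc; apply: Plim hc.
Qed.

Lemma pn_eq (hmin : forall P, closed_subfield nK P -> forall x, P x) z :
  proj_norm (tens_eq_K fA fB) cost z = pnZ cost z.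
Proof.
have hP := hmin _ P_closed.
have [k1 k2] := @Rinf_spec (fun r => exists w, tens_eq_K fA fB w z /\ r = cost w)
  (ex_intro _ (cost z) (ex_intro _ z (conj (fun _ _ _ _ => erefl) erefl)))
  (fun x '(ex_intro w (conj _ e)) => eq_ind_r _ (Cnn w) e).
rewrite /proj_norm -/(Rinf _); apply: Rle_antisym.
- apply: (pn_glb Cnn) => w hw; apply: k1; exists w; split => //.
  by move=> M be hbe _; exact: hw M be hbe.
- apply: k2 => x [w [hw ->]].
  have h0 : G (fsub w z) = Rzero by apply: (gK (g := G)) hw => k a b; apply: hP.
  have e1 : tens_eq_Z z (w ++ fsub z w).
    by move=> M be hbe; rewrite -!/(S _ _) S_cat S_fsub // addrC subrK.
  have e2 : tens_eq_Z (fsub z w) (negf (fsub w z)).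
    by move=> M be hbe; rewrite -!/(S _ _) S_neg // !S_fsub // opprB.
  have h1 := pn_tri Cnn Capp w (fsub z w).
  rewrite -(pn_resp Cnn e1) (pn_resp Cnn e2) (pn_neg Cnn Cneg) in h1.
  change (pnZ cost (fsub w z)) with (G (fsub w z)) in h1.
  rewrite h0 in h1.
  have h2 : Rle (pnZ cost w) (cost w) by apply: (pn_le Cnn).
  rewrite /Rzero in h1; lra.
Qed.

End KPart.

Section Costs.
Variables (A B : zmodType) (nA : A -> R) (nB : B -> R).
Hypothesis nAnn : forall a, Rle Rzero (nA a).
Hypothesis nBnn : forall b, Rle Rzero (nB b).
Hypothesis nAopp : forall a, nA (- a) = nA a.

Lemma cs_nn w : Rle Rzero (cost_sum nA nB w).
Proof.
elim: w => [|p w IH] /=; first exact: Rle_refl.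
have := Rmult_le_pos _ _ (nAnn p.1) (nBnn p.2); rewrite /Rzero in IH *; lra.
Qed.
Lemma cs_app u v : Rle (cost_sum nA nB (u ++ v)) (Rplus (cost_sum nA nB u) (cost_sum nA nB v)).
Proof.
elim: u => [|p u IH] /=; first by rewrite /Rzero; lra.
lra.
Qed.
Lemma cs_neg u : cost_sum nA nB (negf u) = cost_sum nA nB u.
Proof. by elim: u => [|p u IH] //=; rewrite IH nAopp. Qed.
Lemma cs_pair (p q : A * B) : Rle (cost_sum nA nB [:: p; q])
   (Rplus (Rmult (nA p.1) (nB p.2)) (Rmult (nA q.1) (nB q.2))).
Proof. rewrite /= /Rzero; lra. Qed.

Lemma cm_nn w : Rle Rzero (cost_max nA nB w).
Proof.
elim: w => [|p w IH] /=; first exact: Rle_refl.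
exact: Rle_trans IH (Rmax_r _ _).
Qed.
Lemma cm_app u v : Rle (cost_max nA nB (u ++ v)) (Rplus (cost_max nA nB u) (cost_max nA nB v)).
Proof.
elim: u => [|p u IH] /=; first by rewrite /Rzero; lra.
have h0 := cm_nn v; have h1 := Rmax_l (Rmult (nA p.1) (nB p.2)) (cost_max nA nB u).
have h2 := Rmax_r (Rmult (nA p.1) (nB p.2)) (cost_max nA nB u).
rewrite /Rzero in h0; apply: Rmax_lub; lra.
Qed.
Lemma cm_neg u : cost_max nA nB (negf u) = cost_max nA nB u.
Proof. by elim: u => [|p u IH] //=; rewrite IH nAopp. Qed.
Lemma cm_pair (p q : A * B) : Rle (cost_max nA nB [:: p; q])
   (Rplus (Rmult (nA p.1) (nB p.2)) (Rmult (nA q.1) (nB q.2))).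
Proof.
have h1 := Rmult_le_pos _ _ (nAnn p.1) (nBnn p.2).
have h2 := Rmult_le_pos _ _ (nAnn q.1) (nBnn q.2).
rewrite /Rzero in h1 h2; rewrite /=.
apply: Rmax_lub; first lra.
apply: Rmax_lub; rewrite /Rzero; lra.
Qed.
End Costs.

Lemma Un_cv0 (u : nat -> R) : (forall n, u n = Rzero) -> Un_cv u Rzero.
Proof.
move=> h eps he; exists 0%N => n _; rewrite /R_dist h /Rzero Rminus_diag Rabs_R0.
exact: he.
Qed.

Lemma iso_same (A B : nzRingType) (pn : ftens A B -> R) :
  (forall z, pn (fsub z z) = Rzero) -> canonical_isometric_iso pn pn.
Proof.
move=> h; split.
- by [].
- by [].
- by move=> y hy; exists y; split => //; apply: Un_cv0 => n; apply: h.
- by [].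
- by move=> x y _ _; apply: Un_cv0 => n; apply: h.
Qed.

Theorem lemma2p3 (K : fieldType) (nK : K -> R)
  (A : nzRingType) (nA : A -> R) (fA : {rmorphism K -> A})
  (B : nzRingType) (nB : B -> R) (fB : {rmorphism K -> B}) :
  minimal_cvf nK ->
  unital_K_Banach_algebra nK nA fA ->
  unital_K_Banach_algebra nK nB fB ->
  canonical_isometric_iso
    (proj_norm (@tens_eq_Z A B) (cost_sum nA nB))
    (proj_norm (tens_eq_K fA fB) (cost_sum nA nB))
  /\
  canonical_isometric_iso
    (proj_norm (@tens_eq_Z A B) (cost_max nA nB))
    (proj_norm (tens_eq_K fA fB) (cost_max nA nB)).
Proof.
move=> [hK hmin] [[bA _] _ fAc] [[bB _] _ fBc].
have nAnn := br_nonneg bA; have nBnn := br_nonneg bB.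
have nAopp := br_opp bA; have nAmul := br_submult bA; have nBmul := br_submult bB.
have nKnn := vf_nonneg hK.
split.
- have e : proj_norm (tens_eq_K fA fB) (cost_sum nA nB) =
           proj_norm (@tens_eq_Z A B) (cost_sum nA nB).
    apply: functional_extensionality => z.
    exact: (pn_eq (cs_nn nAnn nBnn) (Logic.eq_refl _) (cs_app nA nB) (cs_neg nB nAopp)
      (cs_pair nA nB) nAnn nBnn nAopp nAmul nBmul fAc fBc nKnn hmin z).
  rewrite e; apply: iso_same => z.
  rewrite -(pn_nil (cs_nn nAnn nBnn) (Logic.eq_refl _)).
  by apply: (pn_resp (cs_nn nAnn nBnn)); apply: teq_fsub0.
- have e : proj_norm (tens_eq_K fA fB) (cost_max nA nB) =
           proj_norm (@tens_eq_Z A B) (cost_max nA nB).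
    apply: functional_extensionality => z.
    exact: (pn_eq (cm_nn nA nB) (Logic.eq_refl _) (cm_app nA nB) (cm_neg nB nAopp)
      (cm_pair nAnn nBnn) nAnn nBnn nAopp nAmul nBmul fAc fBc nKnn hmin z).
  rewrite e; apply: iso_same => z.
  rewrite -(pn_nil (cm_nn nA nB) (Logic.eq_refl _)).
  by apply: (pn_resp (cm_nn nA nB)); apply: teq_fsub0.
Qed.
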